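(* Consider a hierarchical clustering of a sensor network with levels $1,2,\dots,T$. For each level $i$, let $C_i$ be the (finite, nonempty) collection of clusters at level $i$, and for $l \in C_i$ let $N_i^{(l)}$ be the number of nodes in cluster $l$ at level $i$. Assume that every cluster size satisfies $N_i^{(l)} > 3$, and that cluster sizes strictly increase with level: for all levels $j < i$, all $l \in C_j$ and all $p \in C_i$, $N_j^{(l)} < N_i^{(p)}$. Let $K_T > 0$ be the sparsity of the whole data field, and for each level $i$ define the threshold $$K_{i\_T} = \max_{l \in C_i} \frac{N_i^{(l)}}{\log_2 N_i^{(l)}}.$$ In the HDACS scheme, the cluster head of cluster $l$ at level $i$ would transmit $M_i^{(l)} = K_T \log_2 N_i^{(l)}$ compressive-sensing measurements, and it is called CS-disabled if $M_i^{(l)} > N_i^{(l)}$ (in which case it transmits its $N_i^{(l)}$ raw data values instead). If $K_T > K_{i\_T}$ for some level $i$, then every cluster at every level $j \le i$ is CS-disabled, i.e. $K_T \log_2 N_j^{(l)} > N_j^{(l)}$ for all $j \le i$ and all $l \in C_j$.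
   Context: Logarithms are base 2. The sparsity $K_T$ denotes the number of significant (nonzero) coefficients of the entire data field in the transform domain; in HDACS this single global value is used at every cluster to determine the number of measurements $M = K_T \log_2 N$, where $N$ is the local cluster size. *)

(* Defs.v *)
From HB Require Import structures.
From mathcomp Require Import all_boot all_order all_algebra.
From mathcomp Require Import all_classical all_reals all_analysis.
Unset Strict Implicit. Unset Printing Implicit Defensive.
Import Order.TTheory GRing.Theory Num.Theory.
Local Open Scope ring_scope.

Definition log2 {R : realType} (x : R) : R := ln x / ln 2.

Definition measurements {R : realType} (KT : R) (n : nat) : R :=
  KT * log2 (n%:R : R).

Definition cs_disabled {R : realType} (KT : R) (n : nat) : Prop :=
  (n%:R : R) < measurements KT n.

(* Clusters at level i are indexed by 'I_(c i); the max is a big max with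
   neutral element 0 (harmless: all terms are positive since N > 3 and
   C_i is nonempty). *)
Definition level_threshold (R : realType) (c : nat -> nat)
  (N : forall i : nat, 'I_(c i) -> nat) (i : nat) : R :=
  \big[Num.max/0]_(l < c i) ((N i l)%:R / log2 ((N i l)%:R : R)).

(* Main.v *)
Require Import Defs.
From HB Require Import structures.
From mathcomp Require Import all_boot all_order all_algebra.
From mathcomp Require Import all_classical all_reals all_analysis.
From mathcomp Require Import ring lra.
Import Order.TTheory GRing.Theory Num.Theory.
Local Open Scope ring_scope.

Lemma ln2_ge (R : realType) : 1 / 2 <= ln (2 : R).
Proof.
have h := @le_ln1Dx R (- (1/2)).
have e : (1 + - (1/2) : R) = 2^-1 by field.
rewrite e lnV ?posrE // in h.
have : - (1/2 : R) < 1 by lra.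
move=> H; have := h; rewrite ltrNl in H.
have H2 : -1 < - (1/2 : R) by lra.
move/(_ H2) => h'. lra.
Qed.

Lemma ln4_ge (R : realType) : 1 <= ln (4 : R).
Proof.
have -> : (4 : R) = 2 * 2 by lra.
rewrite lnM ?posrE //. have := ln2_ge R. lra.
Qed.

Lemma mono_aux (R : realType) (a b : R) : 4 <= a -> a <= b ->
  a * ln b <= b * ln a.
Proof.
move=> ha hab.
have a0 : 0 < a by lra.
have b0 : 0 < b by lra.
have hla : 1 <= ln a.
  apply: le_trans (ln4_ge R) _; rewrite ler_ln ?posrE; lra.
have hd : ln (b / a) = ln b - ln a by rewrite ln_div ?posrE.
have e : b / a = 1 + (b / a - 1) by ring.
have h1 : -1 < b / a - 1.
  have : 0 < b / a by apply: divr_gt0.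
  lra.
have := le_ln1Dx h1; rewrite -e hd => h2.
have e2 : a * (b / a - 1) = b - a by field; lra.
have : a * (ln b - ln a) <= a * (b / a - 1) by apply: ler_wpM2l; lra.
rewrite e2 => h3.
nra.
Qed.

Lemma mono_f (R : realType) (a b : R) : 4 <= a -> a <= b ->
  a / log2 a <= b / log2 b.
Proof.
move=> ha hab; rewrite /log2.
have l2 : 0 < ln (2 : R) by apply: ln_gt0; lra.
have la : 0 < ln a by apply: ln_gt0; lra.
have lb : 0 < ln b by apply: ln_gt0; lra.
have -> : a / (ln a / ln 2) = (a * ln b) * (ln 2 / (ln a * ln b)).
  by field; rewrite ?gt_eqF.
have -> : b / (ln b / ln 2) = (b * ln a) * (ln 2 / (ln a * ln b)).
  by field; rewrite ?gt_eqF.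
apply: ler_wpM2r; last exact: mono_aux.
apply: divr_ge0; [exact: ltW | apply: mulr_ge0; exact: ltW].
Qed.

Theorem proposition1 (R : realType) (T : nat) (c : nat -> nat)
  (N : forall i : nat, 'I_(c i) -> nat) (KT : R) :
  (forall i : nat, (1 <= i <= T)%N -> (0 < c i)%N) ->
  (forall (i : nat) (l : 'I_(c i)), (1 <= i <= T)%N -> (3 < N i l)%N) ->
  (forall (j i : nat) (l : 'I_(c j)) (p : 'I_(c i)),
      (1 <= j)%N -> (j < i)%N -> (i <= T)%N -> (N j l < N i p)%N) ->
  0 < KT ->
  forall i : nat, (1 <= i <= T)%N ->
  level_threshold R c N i < KT ->
  forall (j : nat) (l : 'I_(c j)), (1 <= j <= i)%N -> cs_disabled KT (N j l).
Proof.
move=> hc hN hinc KT0 i hi hth j l hj.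
have hjT : (1 <= j <= T)%N.
  by case/andP: hi => _ hiT; case/andP: hj => h1 h2; rewrite h1 (leq_trans h2 hiT).
have n4 : (4 <= N j l)%N := hN j l hjT.
have n4R : (4 : R) <= (N j l)%:R by rewrite ler_nat.
suff hf : (N j l)%:R / log2 ((N j l)%:R : R) < KT.
  rewrite /cs_disabled /measurements.
  have lp : 0 < log2 ((N j l)%:R : R).
    rewrite /log2; apply: divr_gt0; apply: ln_gt0; lra.
  by rewrite -ltr_pdivrMr.
apply: le_lt_trans hth.
rewrite /level_threshold.
set F := (fun l0 : 'I_(c i) => (N i l0)%:R / log2 ((N i l0)%:R : R)).
have bm : forall l0, F l0 <= \big[Num.max/0]_(l1 < c i) F l1.
  move=> l0; exact: le_bigmax.
case/andP: hj => hj1 hji.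
rewrite leq_eqVlt in hji; case/orP: hji => [/eqP ej | hlt].
  subst j. exact: (bm l).
have ci : (0 < c i)%N := hc i hi.
apply: le_trans (bm (Ordinal ci)).
rewrite /F /=.
apply: mono_f => //.
rewrite ler_nat; apply: ltnW; apply: hinc => //.
by case/andP: hi.
Qed.
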